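(* For every finite graph $G$ with at least one vertex there exists an Eulerian subgraph $G'$ of $G$ such that $$\frac{|E(G')|}{|V(G')|}\ \ge\ \frac{|E(G)|+1}{|V(G)|}-1.$$
   Context: A graph is Eulerian if it is connected and every vertex has even degree (a single vertex with no edges counts as Eulerian). *)

(* Defs.v *)
From HB Require Import structures.
From mathcomp Require Import all_boot all_order all_algebra.
Set Implicit Arguments. Unset Strict Implicit. Unset Printing Implicit Defensive.

Definition simple_graph (T : finType) (e : rel T) : Prop :=
  symmetric e /\ irreflexive e.

Definition edges (T : finType) (e : rel T) : {set {set T}} :=
  [set [set p.1; p.2] | p in [set p : T * T | e p.1 p.2]].

Definition is_subgraph (T : finType) (e : rel T) (S : {set T}) (F : {set {set T}}) : Prop :=
  F \subset edges e /\ forall f, f \in F -> f \subset S.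

Definition deg (T : finType) (F : {set {set T}}) (v : T) : nat :=
  #|[set f in F | v \in f]|.

Definition adjF (T : finType) (F : {set {set T}}) : rel T :=
  fun x y => [set x; y] \in F.

(* The graph (S, F) is Eulerian: connected and all degrees even
   (a single vertex with no edges counts as Eulerian). *)
Definition eulerian (T : finType) (S : {set T}) (F : {set {set T}}) : Prop :=
  (forall x y, x \in S -> y \in S -> connect (adjF F) x y) /\
  (forall v, v \in S -> ~~ odd (deg F v)).

(* Main.v *)
Require Import Defs.
From HB Require Import structures.
From mathcomp Require Import all_boot all_order all_algebra.
From mathcomp Require Import zify.
Import Order.TTheory GRing.Theory Num.Theory.

Lemma edge_card (T : finType) (e : rel T) f : irreflexive e -> f \in edges e -> #|f| = 2.
Proof.
move=> irr /imsetP [p]; rewrite inE => epq ->.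
rewrite cards2; case: eqP => // Hp; by rewrite Hp irr in epq.
Qed.

Lemma deg_sum (T : finType) (F : {set {set T}}) v : deg F v = \sum_(f in F) (v \in f).
Proof.
rewrite /deg -sum1_card [RHS]big_mkcond [LHS]big_mkcond /=; apply: eq_bigr => f _.
by rewrite !inE; case: (f \in F); case: (v \in f).
Qed.

Lemma handshake (T : finType) (e : rel T) (C : {set {set T}}) : irreflexive e -> C \subset edges e ->
  \sum_v deg C v = 2 * #|C|.
Proof.
move=> irr sub.
under eq_bigr => v _ do rewrite deg_sum.
rewrite exchange_big /= -sum1_card big_distrr /=.
apply: eq_bigr => f fC.
rewrite muln1 -(@edge_card T e f irr (subsetP sub f fC)) -sum1_card [RHS]big_mkcond /=.
by apply: eq_bigr => v _; case: (v \in f).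
Qed.

Lemma deg_symD (T : finType) (A B : {set {set T}}) v :
  odd (deg ((A :\: B) :|: (B :\: A)) v) = odd (deg A v) (+) odd (deg B v).
Proof.
rewrite /deg.
set a := [set f in A | v \in f]; set b := [set f in B | v \in f].
have -> : [set f in (A :\: B) :|: (B :\: A) | v \in f] = (a :\: b) :|: (b :\: a).
  by apply/setP => f; rewrite !inE; case: (f \in A); case: (f \in B); case: (v \in f).
have H : #|(a :\: b) :|: (b :\: a)| + 2 * #|a :&: b| = #|a| + #|b|.
  rewrite cardsU.
  have -> : (a :\: b) :&: (b :\: a) = set0.
    by apply/setP => f; rewrite !inE; case: (f \in A); case: (f \in B); case: (v \in f).
  rewrite cards0 subn0 -(cardsID b a) -(cardsID a b) setIC; lia.
have := congr1 odd H; rewrite oddD oddM /= addbF oddD => ->.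
by [].
Qed.

Lemma even_sub (T : finType) (e : rel T) (v0 : T) (G : {set {set T}}) :
  irreflexive e -> G \subset edges e -> #|T| <= #|G| ->
  exists C : {set {set T}}, [/\ C \subset G, C != set0 & forall v, ~~ odd (deg C v)].
Proof.
move=> irr sub hc.
pose phi (A : {set {set T}}) := [set v | odd (deg A v) && (v != v0)].
have : ~~ dinjectiveb phi (powerset G).
  apply/negP => /dinjectiveP inj.
  have h1 := card_in_imset inj.
  have h2 : [set phi x | x in powerset G] \subset powerset (~: [set v0]).
    apply/subsetP => X /imsetP [A _ ->]; rewrite inE.
    by apply/subsetP => v; rewrite !inE => /andP [].
  have := subset_leq_card h2.
  rewrite h1 !card_powerset cardsC1.
  have hT : 0 < #|T| by apply/card_gt0P; exists v0.
  have : 2 ^ #|T|.-1 < 2 ^ #|G| by rewrite ltn_exp2l //; lia.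
  lia.
case/dinjectivePn => A; rewrite inE => AG [B]; rewrite !inE => /andP [BA BG] hphi.
exists ((A :\: B) :|: (B :\: A)); split.
- rewrite subUset; apply/andP; split; apply: subset_trans (subsetDl _ _) _; assumption.
- rewrite setU_eq0 !setD_eq0; apply/negP => /andP [h1 h2].
  by move: BA; rewrite eq_sym eqEsubset h1 h2.
- have odd_ne : forall v, v != v0 -> ~~ odd (deg ((A :\: B) :|: (B :\: A)) v).
    move=> v hv; rewrite deg_symD.
    have := congr1 (fun X : {set T} => v \in X) hphi; rewrite /= !inE hv !andbT => ->.
    by rewrite addbb.
  move=> v; case: (eqVneq v v0) => [->|hv]; last exact: odd_ne.
  set C := (A :\: B) :|: (B :\: A).
  have sC : C \subset edges e.
    rewrite subUset; apply/andP; split; apply: subset_trans (subsetDl _ _) _;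
      apply: subset_trans sub; assumption.
  have hs := @handshake T e C irr sC.
  rewrite (bigD1 v0) //= in hs.
  have hd : 2 %| \sum_(i | i != v0) deg C i.
    by apply: dvdn_sum => i hi; rewrite dvdn2 odd_ne.
  rewrite -dvdn2 -(dvdn_addl _ hd) hs; exact: dvdn_mulr.
Qed.
Lemma big_even (T : finType) (e : rel T) (v0 : T) : irreflexive e ->
  exists F : {set {set T}}, [/\ F \subset edges e, forall v, ~~ odd (deg F v) & #|edges e| < #|F| + #|T|].
Proof.
move=> irr.
pose P (F : {set {set T}}) := (F \subset edges e) && [forall v, ~~ odd (deg F v)].
have P0 : P set0.
  rewrite /P sub0set /=; apply/forallP => v.
  by rewrite deg_sum big_set0.
case: (@arg_maxnP _ set0 P (fun F => #|F|) P0) => F /andP [sF /forallP eF] maxF.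
exists F; split => //.
rewrite ltnNge; apply/negP => hle.
have hG : #|T| <= #|edges e :\: F|.
  have := cardsID F (edges e); rewrite (setIidPr sF); lia.
have [C [sC nC eC]] := @even_sub T e v0 _ irr (subsetDl _ _) hG.
have dis : F :&: C = set0.
  apply/setP => f; rewrite !inE; apply/negP => /andP [fF fC].
  by have := subsetP sC f fC; rewrite inE fF.
have hFC : F :|: C = (F :\: C) :|: (C :\: F).
  apply/setP => f; rewrite !inE.
  have := congr1 (fun X : {set {set T}} => f \in X) dis; rewrite /= !inE.
  by case: (f \in F); case: (f \in C).
have := maxF (F :|: C).
have -> : P (F :|: C).
  apply/andP; split.
    rewrite subUset sF /=; apply: subset_trans sC _; exact: subsetDl.
  by apply/forallP => v; rewrite hFC deg_symD (negbTE (eF v)) (negbTE (eC v)).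
move=> /(_ isT); rewrite cardsU dis cards0 subn0.
have : 0 < #|C| by rewrite card_gt0.
lia.
Qed.

Definition good (T : finType) (e : rel T) (k n : nat) (S : {set T}) (F : {set {set T}}) :=
  [/\ F \subset edges e, forall f, f \in F -> f \subset S,
      forall v, v \in S -> ~~ odd (deg F v) & k * #|S| <= #|F| * n].

Arguments good {T}.

Lemma split_conn (T : finType) (e : rel T) (k n : nat) N : forall (S : {set T}) (F : {set {set T}}), #|S| <= N -> S != set0 ->
  good e k n S F ->
  exists S' F', [/\ S' != set0, good e k n S' F' &
                    forall x y, x \in S' -> y \in S' -> connect (adjF F') x y].
Proof.
elim: N => [|N IH] S F hS nS gS.
  by move: nS; rewrite -card_gt0; lia.
case: (pickP [pred xy : T * T | [&& xy.1 \in S, xy.2 \in S & ~~ connect (adjF F) xy.1 xy.2]]);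
  last first.
  move=> hn; exists S, F; split => // x y xS yS.
  by have := hn (x, y); rewrite /= xS yS /= => /negbFE.
case=> x y /=; case/and3P => xS yS nxy.
case: gS => sF fS eF cnt.
pose C := [set z in S | connect (adjF F) x z].
have CS : C \subset S by apply/subsetP => z; rewrite inE => /andP [].
have dich : forall f z, f \in F -> z \in f -> z \in C -> f \subset C.
  move=> f z fF zf zC.
  have := subsetP sF f fF; case/imsetP => p _ fp.
  have fS' := fS f fF.
  move: zf zC; rewrite fp !inE => /orP [] /eqP -> /andP [_ hc]; apply/subsetP => w;
    rewrite !inE => /orP [] /eqP ->; rewrite -?fp.
  - by rewrite (subsetP fS') ?fp ?inE ?eqxx.
  - rewrite (subsetP fS') ?fp ?inE ?eqxx ?orbT //=.
    by apply: connect_trans hc (connect1 _); rewrite /adjF -fp.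
  - rewrite (subsetP fS') ?fp ?inE ?eqxx ?orbT //=.
    by apply: connect_trans hc (connect1 _); rewrite /adjF setUC -fp.
  - by rewrite (subsetP fS') ?fp ?inE ?eqxx ?orbT.
pose B := [set f : {set T} | f \subset C].
pose F1 := F :&: B. pose F2 := F :\: B. pose S2 := S :\: C.
have xC : x \in C by rewrite inE xS connect0.
have yC : y \notin C by rewrite inE yS.
have g1 : good e k n C F1 \/ good e k n S2 F2.
  have d1 : forall v, v \in C -> deg F1 v = deg F v.
    move=> v vC; rewrite /deg; apply: eq_card => f; rewrite !inE.
    case fF: (f \in F) => //=; case vf: (v \in f) => //=; rewrite ?andbF //.
    by rewrite (dich f v).
  have d2 : forall v, v \in S2 -> deg F2 v = deg F v.
    move=> v; rewrite inE => /andP [vC vS]; rewrite /deg; apply: eq_card => f; rewrite !inE.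
    case fF: (f \in F) => //=; case vf: (v \in f) => //=; rewrite ?andbF ?andbT //.
    by apply/negP => /subsetP /(_ v vf); apply/negP.
  have c1 : #|F1| + #|F2| = #|F| by rewrite cardsID.
  have c2 : #|C| + #|S2| = #|S| by rewrite -(cardsID C S) (setIidPr CS).
  case: (leqP (k * #|C|) (#|F1| * n)) => h1.
    left; split => //.
    - by apply: subset_trans sF; apply: subsetIl.
    - by move=> f; rewrite !inE => /andP [].
    - by move=> v vC; rewrite d1 // eF // (subsetP CS).
  right; split => //.
  - by apply: subset_trans sF; apply: subsetDl.
  - move=> f; rewrite !inE => /andP [nB fF]; apply/subsetP => w wf.
    rewrite in_setD (subsetP (fS f fF)) // andbT; apply/negP => wC.
    by rewrite (dich f w fF wf wC) in nB.
  - by move=> v vS2; rewrite d2 // eF //; move: vS2; rewrite inE => /andP [].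
  - move: cnt; rewrite -c1 -c2 mulnDr mulnDl; lia.
have cC : #|C| < #|S|.
  by apply: proper_card; apply/properP; split => //; exists y.
have cS2 : #|S2| < #|S|.
  by apply: proper_card; apply/properP; split; [exact: subsetDl | exists x => //; rewrite inE xC].
case: g1 => g.
  apply: (IH C F1) => //; [lia | by apply/set0Pn; exists x].
apply: (IH S2 F2) => //; [lia | by apply/set0Pn; exists y; rewrite inE yC].
Qed.

Local Open Scope ring_scope.

Theorem lemma3p3 (T : finType) (e : rel T) :
  simple_graph e -> (0 < #|T|)%N ->
  exists (S : {set T}) (F : {set {set T}}),
    [/\ is_subgraph e S F, S != set0, eulerian S F &
        (#|F|%:R / #|S|%:R : rat) >= (#|edges e|.+1)%:R / #|T|%:R - 1].
Proof.
move=> [_ irr] hT.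
have [v0 _] := card_gt0P hT.
have [F [sF eF hF]] := @big_even T e v0 irr.
pose k := (#|edges e|.+1 - #|T|)%N.
have g0 : good e k #|T| setT F.
  split; [exact: sF | by move=> f _; apply: subsetT | by move=> v _; apply: eF | ].
  by rewrite cardsT; apply: leq_mul => //; rewrite /k; lia.
have nT : (setT : {set T}) != set0 by apply/set0Pn; exists v0; rewrite inE.
have [S [F' [nS [sF' fS eF' cnt] conn]]] :=
  @split_conn T e k #|T| #|T| setT F (max_card _) nT g0.
exists S, F'; split => //.
have hS : (0 < #|S|)%N by rewrite card_gt0.
have hk : (#|edges e|.+1 <= k + #|T|)%N by rewrite /k; lia.
move: hk cnt; rewrite -(ler_nat rat) -(ler_nat rat) !natrM natrD.
move: hS hT; rewrite -(ltr_nat rat) -(ltr_nat rat).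
set s := #|S|%:R; set N := #|T|%:R; set K := k%:R; set a := #|F'|%:R; set m1 := _.+1%:R.
move=> hS hN hk cnt.
have h1 : m1 / N - 1 <= K / N.
  rewrite lerBlDr.
  have -> : K / N + 1 = (K + N) / N by rewrite mulrDl divff // lt0r_neq0.
  by rewrite ler_pM2r // invr_gt0.
apply: le_trans h1 _.
by rewrite ler_pdivlMr // mulrAC ler_pdivrMr.
Qed.
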